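(* Let $\{X_j,\mathcal F_j\}_{j=1}^n$ be an $\mathcal{SL}$-submartingale. Then for every $\lambda>0$: (i) $\displaystyle \lambda\,\mathbb V\Big(\max_{1\le j\le n}X_j\ge\lambda\Big)\le \mathcal E\Big(I_{\{\max_{1\le j\le n}X_j\ge\lambda\}}X_n\Big)\le \mathcal E(X_n^+)\le\mathcal E(|X_n|)$, where $X_n^+:=X_n\vee 0$; (ii) $\displaystyle \lambda\, v\Big(\min_{1\le j\le n}X_j\le-\lambda\Big)\le \mathcal E(X_n)-\mathcal E(X_1)+\mathcal E\Big(-I_{\{\min_{1\le j\le n}X_j\le-\lambda\}}X_n\Big)\le \mathcal E(X_n)-\mathcal E(X_1)+\mathcal E(X_n^-)$, where $X_n^-:=-(X_n\wedge 0)$.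
   Context: Standing setting. $(\Omega,\mathcal F)$ is a measurable space with a discrete-time filtration $(\mathcal F_t)_{t\in\mathbb N}$, $\mathcal F_0$ trivial and $\mathcal F=\sigma(\bigcup_t\mathcal F_t)$. $\mathcal H$ is a linear space of $\mathcal F$-measurable real functions on $\Omega$ containing the constants, such that $X\in\mathcal H$ implies $|X|\in\mathcal H$ and $I_AX\in\mathcal H$ for all $A\in\mathcal F$; $\mathcal H_t:=\{X\in\mathcal H: X \text{ is } \mathcal F_t\text{-measurable}\}$. A family of maps $\mathcal E_t:\mathcal H\to\mathcal H_t$ is an $\mathcal{SL}$-expectation if for all $X,Y\in\mathcal H$ and $s\le t$: (i) $X\ge Y\Rightarrow\mathcal E_t(X)\ge\mathcal E_t(Y)$; (ii) $\mathcal E_s(\mathcal E_t(Y))=\mathcal E_s(Y)$; (iii) $\mathcal E_t(I_AY)=I_A\mathcal E_t(Y)$ for $A\in\mathcal F_t$; (iv) $\mathcal E_t(Y)=Y$ for $Y\in\mathcal H_t$; (v) $\mathcal E_t(X+Y)\le\mathcal E_t(X)+\mathcal E_t(Y)$; (vi) $\mathcal E_t(\lambda Y)=\lambda^+\mathcal E_t(Y)+\lambda^-\mathcal E_t(-Y)$ for $\lambda\in\mathcal H_t$ with $\lambda Y\in\mathcal H$; (vii) if $X_i\in\mathcal H$, $X_i(\omega)\downarrow0$ for every $\omega$, then $\mathcal E_0(X_i)\to0$. Write $\mathcal E:=\mathcal E_0$ (real-valued). Capacities: $\mathbb V(A):=\mathcal E(I_A)$, $v(A):=-\mathcal E(-I_A)$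 for $A\in\mathcal F$. A statement holds quasi-surely (q.s.) if it holds outside a set $N$ with $\mathcal E(I_N)=0$. $\|X\|_1:=\mathcal E(|X|)$; $L^1$ is the completion of $\{X\in\mathcal H:\|X\|_1<\infty\}$ under $\|\cdot\|_1$ modulo null elements, and $\mathcal E_t$ extend to $L^1$ by continuity. For a stopping time $T$, $\mathcal E_T(\cdot)(\omega):=\mathcal E_{T(\omega)}(\cdot)(\omega)$. A process $(X_j)$ adapted to $(\mathcal F_j)$ with $X_j\in L^1$ is an $\mathcal{SL}$-submartingale if $X_s\le\mathcal E_s(X_t)$ for all $s\le t$, and an $\mathcal{SL}$-martingale if $X_s=\mathcal E_s(X_t)$ for all $s\le t$. *)

(* Defs.v *)
From Stdlib Require Import Reals Lra Lia Classical ClassicalEpsilon.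
Open Scope R_scope.
Set Implicit Arguments.

Section SL.
Context {Omega : Type}.


Definition indic (A : (Omega -> Prop)) : (Omega -> R) :=
  fun w => if excluded_middle_informative (A w) then 1 else 0.

Definition sigma_algebra (G : (Omega -> Prop) -> Prop) : Prop :=
  G (fun _ => True) /\
  (forall A, G A -> G (fun w => ~ A w)) /\
  (forall A : nat -> (Omega -> Prop), (forall k, G (A k)) -> G (fun w => exists k, A k w)).

Definition measurable (G : (Omega -> Prop) -> Prop) (X : (Omega -> R)) : Prop :=
  forall a : R, G (fun w => X w <= a).

Definition Finf (F : nat -> (Omega -> Prop) -> Prop) : (Omega -> Prop) -> Prop :=
  fun A => forall G, sigma_algebra G -> (forall t B, F t B -> G B) -> G A.

Record filtration (F : nat -> (Omega -> Prop) -> Prop) : Prop := {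
  filt_sigma : forall t, sigma_algebra (F t);
  filt_incr : forall s t A, (s <= t)%nat -> F s A -> F t A;
  filt_triv : forall A, F 0%nat A -> (forall w, ~ A w) \/ (forall w, A w)
}.

Record Hspace (F : nat -> (Omega -> Prop) -> Prop) (H : (Omega -> R) -> Prop) : Prop := {
  H_meas : forall X, H X -> measurable (Finf F) X;
  H_add : forall X Y, H X -> H Y -> H (fun w => X w + Y w);
  H_scal : forall (c : R) X, H X -> H (fun w => c * X w);
  H_const : forall c : R, H (fun _ => c);
  H_abs : forall X, H X -> H (fun w => Rabs (X w));
  H_ind : forall A X, Finf F A -> H X -> H (fun w => indic A w * X w)
}.

Definition Ht (F : nat -> (Omega -> Prop) -> Prop) (H : (Omega -> R) -> Prop) (t : nat) (X : (Omega -> R)) :=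
  H X /\ measurable (F t) X.

Definition ppart (x : R) := Rmax x 0.
Definition npart (x : R) := Rmax (- x) 0.

Record SLexp (F : nat -> (Omega -> Prop) -> Prop) (H : (Omega -> R) -> Prop)
       (E : nat -> (Omega -> R) -> (Omega -> R)) : Prop := {
  E_range : forall t X, H X -> Ht F H t (E t X);
  E_mono : forall t X Y, H X -> H Y -> (forall w, X w >= Y w) ->
           forall w, E t X w >= E t Y w;
  E_tower : forall s t Y, (s <= t)%nat -> H Y ->
           forall w, E s (E t Y) w = E s Y w;
  E_ind : forall t A Y, F t A -> H Y ->
           forall w, E t (fun v => indic A v * Y v) w = indic A w * E t Y w;
  E_id : forall t Y, Ht F H t Y -> forall w, E t Y w = Y w;
  E_subadd : forall t X Y, H X -> H Y ->
           forall w, E t (fun v => X v + Y v) w <= E t X w + E t Y w;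
  E_homog : forall t (lam Y : (Omega -> R)), Ht F H t lam -> H Y ->
           H (fun v => lam v * Y v) ->
           forall w, E t (fun v => lam v * Y v) w =
                     ppart (lam w) * E t Y w + npart (lam w) * E t (fun v => - Y v) w;
  E_cont : forall X : nat -> (Omega -> R), (forall i, H (X i)) ->
           (forall i w, X (S i) w <= X i w) ->
           (forall w, Un_cv (fun i => X i w) 0) ->
           forall w, Un_cv (fun i => E 0%nat (X i) w) 0
}.

Section L1.
Variables (F : nat -> (Omega -> Prop) -> Prop) (H : (Omega -> R) -> Prop) (E : nat -> (Omega -> R) -> (Omega -> R))
          (w0 : Omega).

(* the real-valued expectation E = E_0 (E_0 X is constant since F_0 is trivial) *)
Definition Ereal (X : (Omega -> R)) : R := E 0%nat X w0.

Definition capV (A : (Omega -> Prop)) : R := Ereal (indic A).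
Definition capv (A : (Omega -> Prop)) : R := - Ereal (fun w => - indic A w).

Definition null (N : (Omega -> Prop)) : Prop := Finf F N /\ Ereal (indic N) = 0.

Definition qs (P : Omega -> Prop) : Prop :=
  exists N, null N /\ forall w, ~ N w -> P w.

(* Y is a fast ||.||_1-Cauchy sequence in H representing (q.s.) the function X *)
Definition approx (X : (Omega -> R)) (Y : nat -> (Omega -> R)) : Prop :=
  (forall k, H (Y k)) /\
  (forall k, Ereal (fun w => Rabs (Y (S k) w - Y k w)) <= (/ 2) ^ k) /\
  qs (fun w => Un_cv (fun k => Y k w) (X w)).

Definition inL1 (X : (Omega -> R)) : Prop := exists Y, approx X Y.

(* Z is (a version of) the continuous extension E_t(X) for X in L^1 *)
Definition CEL1 (t : nat) (X Z : (Omega -> R)) : Prop :=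
  exists Y, approx X Y /\ qs (fun w => Un_cv (fun k => E t (Y k) w) (Z w)).

(* r is the continuous extension E(X) for X in L^1 *)
Definition EL1 (X : (Omega -> R)) (r : R) : Prop :=
  exists Y, approx X Y /\ Un_cv (fun k => Ereal (Y k)) r.

Definition SLsubmart (n : nat) (X : nat -> (Omega -> R)) : Prop :=
  (forall j, (1 <= j <= n)%nat -> measurable (F j) (X j) /\ inL1 (X j)) /\
  (forall s t, (1 <= s)%nat -> (s <= t)%nat -> (t <= n)%nat ->
     exists Z, CEL1 s (X t) Z /\ qs (fun w => X s w <= Z w)).

End L1.

(* max_{1<=j<=m} X_j and min_{1<=j<=m} X_j (meaningful for m >= 1) *)
Fixpoint maxX (X : nat -> (Omega -> R)) (m : nat) (w : Omega) : R :=
  match m with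
  | O => X 1%nat w
  | S k => Rmax (maxX X k w) (X (S k) w)
  end.
Fixpoint minX (X : nat -> (Omega -> R)) (m : nat) (w : Omega) : R :=
  match m with
  | O => X 1%nat w
  | S k => Rmin (minX X k w) (X (S k) w)
  end.

End SL.

(* Main.v *)
Require Import Defs.
From Stdlib Require Import Reals Lra Lia FunctionalExtensionality PropExtensionality Classical ClassicalEpsilon.
Open Scope R_scope.

Lemma fext {Omega : Type} (f g : Omega -> R) : (forall w, f w = g w) -> f = g.
Proof. apply functional_extensionality. Qed.

Lemma sext {Omega : Type} (A B : Omega -> Prop) : (forall w, A w <-> B w) -> A = B.
Proof. intro h; apply functional_extensionality; intro w; apply propositional_extensionality; auto. Qed.

Section dummy. End dummy.

Lemma sa_ext {Omega : Type} (G : (Omega -> Prop) -> Prop) A B :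
  G A -> (forall w, A w <-> B w) -> G B.
Proof. intros h e; rewrite <- (sext A B e); exact h. Qed.

Lemma sa_True {Omega : Type} (G : (Omega -> Prop) -> Prop) : sigma_algebra G -> G (fun _ => True).
Proof. intros [a _]; exact a. Qed.

Lemma sa_compl {Omega : Type} (G : (Omega -> Prop) -> Prop) A : sigma_algebra G -> G A -> G (fun w => ~ A w).
Proof. intros [_ [b _]] h; apply b, h. Qed.

Lemma sa_False {Omega : Type} (G : (Omega -> Prop) -> Prop) : sigma_algebra G -> G (fun _ => False).
Proof. intro hG. apply (sa_ext _ (fun w => ~ True)). apply sa_compl; auto. apply sa_True; auto.
  intros; tauto. Qed.

Lemma sa_cunion {Omega : Type} (G : (Omega -> Prop) -> Prop) (A : nat -> Omega -> Prop) :
  sigma_algebra G -> (forall k, G (A k)) -> G (fun w => exists k, A k w).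
Proof. intros [_ [_ c]] h; apply c, h. Qed.

Lemma sa_union {Omega : Type} (G : (Omega -> Prop) -> Prop) A B :
  sigma_algebra G -> G A -> G B -> G (fun w => A w \/ B w).
Proof. intros hG ha hb.
  apply (sa_ext _ (fun w => exists k, (fun k => match k with O => A | _ => B end) k w)).
  apply sa_cunion; auto. intros [|k]; auto.
  intro w; split. intros [[|k] h]; auto. intros [h|h]. exists O; auto. exists 1%nat; auto. Qed.

Lemma sa_inter {Omega : Type} (G : (Omega -> Prop) -> Prop) A B :
  sigma_algebra G -> G A -> G B -> G (fun w => A w /\ B w).
Proof. intros hG ha hb.
  apply (sa_ext _ (fun w => ~ (~ A w \/ ~ B w))).
  apply sa_compl; auto; apply sa_union; auto; apply sa_compl; auto.
  intro w; tauto. Qed.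

Lemma sa_prop {Omega : Type} (G : (Omega -> Prop) -> Prop) (P : Prop) :
  sigma_algebra G -> G (fun _ : Omega => P).
Proof. intro hG. destruct (classic P) as [p|p].
  apply (sa_ext _ (fun _ => True)). apply sa_True; auto. intros; tauto.
  apply (sa_ext _ (fun _ => False)). apply sa_False; auto. intros; tauto. Qed.

Lemma meas_le {Omega : Type} (G : (Omega -> Prop) -> Prop) X a :
  measurable G X -> G (fun w => X w <= a).
Proof. intro h; apply h. Qed.

Lemma meas_lt {Omega : Type} (G : (Omega -> Prop) -> Prop) X a :
  sigma_algebra G -> measurable G X -> G (fun w => X w < a).
Proof. intros hG h.
  apply (sa_ext _ (fun w => exists k, (fun k w => X w <= a - / INR (S k)) k w)).
  apply sa_cunion; auto.
  intro w; split.
  - intros [k hk]. assert (0 < / INR (S k)). apply Rinv_0_lt_compat, lt_0_INR; lia. lra.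
  - intro hl. destruct (archimed_cor1 (a - X w)) as [N [hN hN0]]. lra.
    exists (pred N). replace (S (pred N)) with N by lia. lra. Qed.

Lemma meas_ge {Omega : Type} (G : (Omega -> Prop) -> Prop) X a :
  sigma_algebra G -> measurable G X -> G (fun w => X w >= a).
Proof. intros hG h.
  apply (sa_ext _ (fun w => ~ (X w < a))). apply sa_compl; auto. apply meas_lt; auto.
  intro w; lra. Qed.

Lemma meas_const {Omega : Type} (G : (Omega -> Prop) -> Prop) (c : R) :
  sigma_algebra G -> measurable G (fun _ : Omega => c).
Proof. intros hG a. apply sa_prop; auto. Qed.

Lemma indic_01 {Omega : Type} (A : Omega -> Prop) w : indic A w = 1 /\ A w \/ indic A w = 0 /\ ~ A w.
Proof. unfold indic; destruct (excluded_middle_informative (A w)); auto. Qed.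

Lemma meas_indic_mul {Omega : Type} (G : (Omega -> Prop) -> Prop) A X :
  sigma_algebra G -> G A -> measurable G X -> measurable G (fun w => indic A w * X w).
Proof. intros hG hA hX a.
  apply (sa_ext _ (fun w => (A w /\ X w <= a) \/ (~ A w /\ 0 <= a))).
  apply sa_union; auto. apply sa_inter; auto. apply sa_inter; auto. apply sa_compl; auto. apply sa_prop; auto.
  intro w; destruct (indic_01 A w) as [[e h]|[e h]]; rewrite e; split; intro hh.
  - destruct hh as [hh|hh]; [lra|tauto].
  - left; split; auto; lra.
  - destruct hh as [hh|hh]; [tauto|lra].
  - right; split; auto; lra. Qed.

Lemma meas_opp {Omega : Type} (G : (Omega -> Prop) -> Prop) X :
  sigma_algebra G -> measurable G X -> measurable G (fun w => - X w).
Proof. intros hG h a. apply (sa_ext _ (fun w => X w >= - a)). apply meas_ge; auto. intro; lra. Qed.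

Lemma Finf_sa {Omega : Type} (F : nat -> (Omega -> Prop) -> Prop) : sigma_algebra (Finf F).
Proof. split; [|split].
  - intros G hG _; apply sa_True; auto.
  - intros A hA G hG hF; apply sa_compl; auto. apply hA; auto.
  - intros A hA G hG hF; apply sa_cunion; auto. intro k; apply hA; auto. Qed.

Lemma F_Finf {Omega : Type} (F : nat -> (Omega -> Prop) -> Prop) t A : F t A -> Finf F A.
Proof. intros h G hG hF; eapply hF; eauto. Qed.

Lemma H_ext {Omega : Type} {F : nat -> (Omega -> Prop) -> Prop} {H : (Omega -> R) -> Prop}
  (f g : Omega -> R) : H f -> (forall w, f w = g w) -> H g.
Proof. intros h e; rewrite <- (fext f g e); exact h. Qed.

Section Hlem. End Hlem.

Lemma H_cst {Omega : Type} {F : nat -> (Omega -> Prop) -> Prop} {H : (Omega -> R) -> Prop}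
  (hH : Hspace F H) (c : R) : H (fun _ => c).
Proof. apply (H_const hH). Qed.

Lemma H_opp {Omega : Type} {F : nat -> (Omega -> Prop) -> Prop} {H : (Omega -> R) -> Prop}
  (hH : Hspace F H) f : H f -> H (fun w => - f w).
Proof. intro h. apply (H_ext (F:=F) (fun w => -1 * f w)). apply (H_scal hH); auto. intro; ring. Qed.

Lemma H_plus {Omega : Type} {F : nat -> (Omega -> Prop) -> Prop} {H : (Omega -> R) -> Prop}
  (hH : Hspace F H) f g : H f -> H g -> H (fun w => f w + g w).
Proof. apply (H_add hH). Qed.

Lemma H_minus {Omega : Type} {F : nat -> (Omega -> Prop) -> Prop} {H : (Omega -> R) -> Prop}
  (hH : Hspace F H) f g : H f -> H g -> H (fun w => f w - g w).
Proof. intros a b. apply (H_ext (F:=F) (fun w => f w + - g w)). apply (H_add hH); auto. apply (H_opp hH); auto.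
  intro; ring. Qed.

Lemma H_mulc {Omega : Type} {F : nat -> (Omega -> Prop) -> Prop} {H : (Omega -> R) -> Prop}
  (hH : Hspace F H) c f : H f -> H (fun w => c * f w).
Proof. apply (H_scal hH). Qed.

Lemma H_rabs {Omega : Type} {F : nat -> (Omega -> Prop) -> Prop} {H : (Omega -> R) -> Prop}
  (hH : Hspace F H) f : H f -> H (fun w => Rabs (f w)).
Proof. apply (H_abs hH). Qed.

Lemma H_pp {Omega : Type} {F : nat -> (Omega -> Prop) -> Prop} {H : (Omega -> R) -> Prop}
  (hH : Hspace F H) f : H f -> H (fun w => Rmax (f w) 0).
Proof. intro h. apply (H_ext (F:=F) (fun w => / 2 * (f w + Rabs (f w)))).
  apply (H_mulc hH), (H_plus hH); auto. apply (H_rabs hH); auto.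
  intro w. unfold Rmax, Rabs; destruct (Rle_dec (f w) 0); destruct (Rcase_abs (f w)); lra. Qed.

Lemma H_im {Omega : Type} {F : nat -> (Omega -> Prop) -> Prop} {H : (Omega -> R) -> Prop}
  (hH : Hspace F H) A f : Finf F A -> H f -> H (fun w => indic A w * f w).
Proof. apply (H_ind hH). Qed.

Lemma H_ic {Omega : Type} {F : nat -> (Omega -> Prop) -> Prop} {H : (Omega -> R) -> Prop}
  (hH : Hspace F H) A c : Finf F A -> H (fun w => c * indic A w).
Proof. intro h. apply (H_ext (F:=F) (fun w => indic A w * c)). apply (H_ind hH); auto. apply (H_cst hH).
  intro; ring. Qed.

Lemma H_indic {Omega : Type} {F : nat -> (Omega -> Prop) -> Prop} {H : (Omega -> R) -> Prop}
  (hH : Hspace F H) A : Finf F A -> H (indic A).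
Proof. intro h. apply (H_ext (F:=F) (fun w => 1 * indic A w)). apply (H_ic hH); auto. intro; ring. Qed.

Lemma Ht_cst {Omega : Type} {F : nat -> (Omega -> Prop) -> Prop} {H : (Omega -> R) -> Prop}
  (hF : filtration F) (hH : Hspace F H) t c : Ht F H t (fun _ : Omega => c).
Proof. split. apply (H_cst hH). apply meas_const. apply (filt_sigma hF). Qed.

Lemma E_eq {Omega : Type} (E : nat -> (Omega -> R) -> (Omega -> R)) t f g w :
  (forall v, f v = g v) -> E t f w = E t g w.
Proof. intro e; rewrite (fext f g e); auto. Qed.

Lemma E_cst {Omega : Type} {F : nat -> (Omega -> Prop) -> Prop} {H : (Omega -> R) -> Prop}
  {E : nat -> (Omega -> R) -> (Omega -> R)}
  (hF : filtration F) (hH : Hspace F H) (hE : SLexp F H E) t c w : E t (fun _ => c) w = c.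
Proof. apply (E_id hE). apply (Ht_cst hF hH). Qed.

Lemma E_le {Omega : Type} {F : nat -> (Omega -> Prop) -> Prop} {H : (Omega -> R) -> Prop}
  {E : nat -> (Omega -> R) -> (Omega -> R)}
  (hE : SLexp F H E) t X Y w : H X -> H Y -> (forall v, X v <= Y v) -> E t X w <= E t Y w.
Proof. intros a b c. apply Rge_le. apply (E_mono hE); auto. intro v; apply Rle_ge; auto. Qed.

Lemma E_nonneg {Omega : Type} {F : nat -> (Omega -> Prop) -> Prop} {H : (Omega -> R) -> Prop}
  {E : nat -> (Omega -> R) -> (Omega -> R)}
  (hF : filtration F) (hH : Hspace F H) (hE : SLexp F H E) t X w : H X -> (forall v, 0 <= X v) -> 0 <= E t X w.
Proof. intros a b. rewrite <- (E_cst hF hH hE t 0 w). apply (E_le hE); auto. apply (H_cst hH). Qed.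

Lemma E_diffle {Omega : Type} {F : nat -> (Omega -> Prop) -> Prop} {H : (Omega -> R) -> Prop}
  {E : nat -> (Omega -> R) -> (Omega -> R)}
  (hH : Hspace F H) (hE : SLexp F H E) t X Y w : H X -> H Y ->
  E t X w - E t Y w <= E t (fun v => X v - Y v) w.
Proof. intros a b. assert (E t X w <= E t (fun v => X v - Y v) w + E t Y w); [|lra].
  rewrite (E_eq E t X (fun v => (X v - Y v) + Y v)). apply (E_subadd hE); auto. apply (H_minus hH); auto.
  intro; ring. Qed.

Lemma E_absd {Omega : Type} {F : nat -> (Omega -> Prop) -> Prop} {H : (Omega -> R) -> Prop}
  {E : nat -> (Omega -> R) -> (Omega -> R)}
  (hH : Hspace F H) (hE : SLexp F H E) t X Y w : H X -> H Y ->
  Rabs (E t X w - E t Y w) <= E t (fun v => Rabs (X v - Y v)) w.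
Proof. intros a b. apply Rabs_le; split.
  - assert (E t Y w - E t X w <= E t (fun v => Rabs (X v - Y v)) w); [|lra].
    eapply Rle_trans. apply (E_diffle hH hE); auto. apply (E_le hE). apply (H_minus hH); auto. apply (H_rabs hH), (H_minus hH); auto.
    intro v. rewrite Rabs_minus_sym. apply Rle_abs.
  - eapply Rle_trans. apply (E_diffle hH hE); auto. apply (E_le hE). apply (H_minus hH); auto. apply (H_rabs hH), (H_minus hH); auto.
    intro v. apply Rle_abs. Qed.

Lemma E_tw {Omega : Type} {F : nat -> (Omega -> Prop) -> Prop} {H : (Omega -> R) -> Prop}
  {E : nat -> (Omega -> R) -> (Omega -> R)}
  (hE : SLexp F H E) t Y w : H Y -> E 0%nat (E t Y) w = E 0%nat Y w.
Proof. intro h. apply (E_tower hE); auto. lia. Qed.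

Lemma E_H {Omega : Type} {F : nat -> (Omega -> Prop) -> Prop} {H : (Omega -> R) -> Prop}
  {E : nat -> (Omega -> R) -> (Omega -> R)}
  (hE : SLexp F H E) t Y : H Y -> H (E t Y).
Proof. intro h. apply (E_range hE t Y h). Qed.

Lemma E_posc {Omega : Type} {F : nat -> (Omega -> Prop) -> Prop} {H : (Omega -> R) -> Prop}
  {E : nat -> (Omega -> R) -> (Omega -> R)}
  (hF : filtration F) (hH : Hspace F H) (hE : SLexp F H E) t c f w : 0 <= c -> H f ->
  E t (fun v => c * f v) w = c * E t f w.
Proof. intros hc hf. rewrite (E_homog hE (lam := fun _ => c) f). unfold ppart, npart.
  rewrite Rmax_left by lra. rewrite Rmax_right by lra. ring.
  apply (Ht_cst hF hH). auto. apply (H_mulc hH); auto. Qed.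

Lemma E_transl {Omega : Type} {F : nat -> (Omega -> Prop) -> Prop} {H : (Omega -> R) -> Prop}
  {E : nat -> (Omega -> R) -> (Omega -> R)}
  (hF : filtration F) (hH : Hspace F H) (hE : SLexp F H E) t P Q w : Ht F H t P -> H Q ->
  E t (fun v => P v + Q v) w = P w + E t Q w.
Proof. intros [hP mP] hQ. apply Rle_antisym.
  - eapply Rle_trans; [apply (E_subadd hE); auto|]. rewrite (E_id hE (t:=t) (Y:=P)); [lra|split; auto].
  - assert (E t Q w <= E t (fun v => P v + Q v) w + E t (fun v => - P v) w).
    rewrite (E_eq E t Q (fun v => (P v + Q v) + - P v)). apply (E_subadd hE); auto.
    apply (H_plus hH); auto. apply (H_opp hH); auto. intro; ring.
    rewrite (E_id hE (t:=t) (Y:=fun v => - P v)) in H0. lra.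
    split. apply (H_opp hH); auto. apply meas_opp; auto. apply (filt_sigma hF). Qed.

Lemma cv_const (c : R) : Un_cv (fun _ => c) c.
Proof. intros e he; exists O; intros; unfold R_dist; rewrite Rminus_diag, Rabs_R0; auto. Qed.

Lemma cv_dom (a b c : nat -> R) la lb lc :
  (forall k, Rabs (a k - la) <= Rabs (b k - lb) + Rabs (c k - lc)) ->
  Un_cv b lb -> Un_cv c lc -> Un_cv a la.
Proof. intros hd hb hc e he.
  destruct (hb (e/2)) as [N1 h1]; [lra|]. destruct (hc (e/2)) as [N2 h2]; [lra|].
  exists (max N1 N2). intros n hn. unfold R_dist in *.
  specialize (h1 n ltac:(lia)). specialize (h2 n ltac:(lia)). specialize (hd n). lra. Qed.

Lemma cv_geom : Un_cv (fun k => (/2)^k) 0.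
Proof. intros e he. destruct (pow_lt_1_zero (/2)) with (y := e) as [N hN]; auto.
  rewrite Rabs_right; lra. exists N; intros n hn; unfold R_dist. rewrite Rminus_0_r. apply hN; lia. Qed.

Lemma lim_le_err (a : R) (b : nat -> R) r D :
  (forall k, a <= b k + D * (/2)^k) -> Un_cv b r -> a <= r.
Proof. intros h hb.
  assert (a <= r + D * 0); [|lra].
  apply (Rle_cv_lim (Un := fun _ => a) (Vn := fun k => b k + D * (/2)^k)); auto.
  apply cv_const. apply CV_plus; auto. apply CV_mult. apply cv_const. apply cv_geom. Qed.

Lemma lim_le_err2 (a b : nat -> R) ra rb D :
  (forall k, a k <= b k + D * (/2)^k) -> Un_cv a ra -> Un_cv b rb -> ra <= rb.
Proof. intros h ha hb.
  assert (ra <= rb + D * 0); [|lra].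
  apply (Rle_cv_lim (Un := a) (Vn := fun k => b k + D * (/2)^k)); auto.
  apply CV_plus; auto. apply CV_mult. apply cv_const. apply cv_geom. Qed.

Lemma null_empty {Omega : Type} {F : nat -> (Omega -> Prop) -> Prop} {H : (Omega -> R) -> Prop}
  {E : nat -> (Omega -> R) -> (Omega -> R)}
  (hF : filtration F) (hH : Hspace F H) (hE : SLexp F H E) w0 : null F E w0 (fun _ => False).
Proof. split. apply sa_False, Finf_sa. unfold Ereal.
  rewrite (E_eq E 0 _ (fun _ => 0)). apply (E_cst hF hH hE).
  intro v; unfold indic; destruct (excluded_middle_informative False); tauto. Qed.

Lemma null_union {Omega : Type} {F : nat -> (Omega -> Prop) -> Prop} {H : (Omega -> R) -> Prop}
  {E : nat -> (Omega -> R) -> (Omega -> R)}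
  (hF : filtration F) (hH : Hspace F H) (hE : SLexp F H E) w0 N1 N2 :
  null F E w0 N1 -> null F E w0 N2 -> null F E w0 (fun w => N1 w \/ N2 w).
Proof. intros [f1 e1] [f2 e2]. assert (fu : Finf F (fun w => N1 w \/ N2 w)) by (apply sa_union; auto; apply Finf_sa).
  split; auto. unfold Ereal in *. apply Rle_antisym.
  - eapply Rle_trans. apply (E_le hE) with (Y := fun w => indic N1 w + indic N2 w).
    apply (H_indic hH); auto. apply (H_plus hH); apply (H_indic hH); auto.
    intro v; unfold indic; repeat destruct excluded_middle_informative; tauto || lra.
    eapply Rle_trans. apply (E_subadd hE); apply (H_indic hH); auto. lra.
  - apply (E_nonneg hF hH hE). apply (H_indic hH); auto. intro v; unfold indic; destruct excluded_middle_informative; lra. Qed.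

Lemma qs_and {Omega : Type} {F : nat -> (Omega -> Prop) -> Prop} {H : (Omega -> R) -> Prop}
  {E : nat -> (Omega -> R) -> (Omega -> R)}
  (hF : filtration F) (hH : Hspace F H) (hE : SLexp F H E) w0 (P Q : Omega -> Prop) :
  qs F E w0 P -> qs F E w0 Q -> qs F E w0 (fun w => P w /\ Q w).
Proof. intros [N1 [n1 h1]] [N2 [n2 h2]]. exists (fun w => N1 w \/ N2 w); split.
  apply (null_union hF hH hE); auto. intros w hw; split; [apply h1|apply h2]; tauto. Qed.

Lemma qs_mono {Omega : Type} {F : nat -> (Omega -> Prop) -> Prop} {E : nat -> (Omega -> R) -> (Omega -> R)} w0
  (P Q : Omega -> Prop) : qs F E w0 P -> (forall w, P w -> Q w) -> qs F E w0 Q.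
Proof. intros [N [n h]] i. exists N; split; auto. Qed.

Lemma qs_all {Omega : Type} {F : nat -> (Omega -> Prop) -> Prop} {H : (Omega -> R) -> Prop}
  {E : nat -> (Omega -> R) -> (Omega -> R)}
  (hF : filtration F) (hH : Hspace F H) (hE : SLexp F H E) w0 (P : Omega -> Prop) :
  (forall w, P w) -> qs F E w0 P.
Proof. intro h. exists (fun _ => False); split. apply (null_empty hF hH hE). auto. Qed.

Lemma null_int {Omega : Type} {F : nat -> (Omega -> Prop) -> Prop} {H : (Omega -> R) -> Prop}
  {E : nat -> (Omega -> R) -> (Omega -> R)}
  (hF : filtration F) (hH : Hspace F H) (hE : SLexp F H E) w0 N g :
  null F E w0 N -> H g -> (forall w, 0 <= g w) -> E 0%nat (fun w => indic N w * g w) w0 = 0.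
Proof. intros [fN eN] hg g0. unfold Ereal in eN.
  set (f := fun (i : nat) w => indic N w * Rmax (g w - INR i) 0).
  assert (Hf : forall i, H (f i)).
  { intro i; apply (H_im hH); auto. apply (H_pp hH), (H_minus hH); auto; apply (H_cst hH). }
  assert (cv : Un_cv (fun i => E 0%nat (f i) w0) 0).
  { apply (E_cont hE f); auto.
    - intros i w; unfold f. rewrite S_INR. destruct (indic_01 N w) as [[e _]|[e _]]; rewrite e.
      2: lra. apply Rmult_le_compat_l; [lra|]. apply Rle_max_compat_r. lra.
    - intros w e he. destruct (INR_archimed 1 (g w)) as [M hM]; [lra|]. exists M; intros n hn.
      unfold R_dist, f. rewrite Rmax_right. rewrite Rmult_0_r, Rminus_0_r, Rabs_R0; auto.
      apply le_INR in hn. lra. }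
  apply Rle_antisym.
  - apply (Rle_cv_lim (Un := fun _ => E 0%nat (fun w => indic N w * g w) w0) (Vn := fun i => E 0%nat (f i) w0)); auto.
    2: apply cv_const. intro i.
    assert (E 0%nat (fun w => INR i * indic N w) w0 = 0).
    { rewrite (E_posc hF hH hE); [|apply pos_INR|apply (H_indic hH); auto]. rewrite eN; ring. }
    eapply Rle_trans. apply (E_le hE) with (Y := fun w => f i w + INR i * indic N w).
    apply (H_im hH); auto. apply (H_plus hH); auto. apply (H_ic hH); auto.
    intro v. unfold f. destruct (indic_01 N v) as [[e _]|[e _]]; rewrite e. 2: lra.
    unfold Rmax; destruct Rle_dec; lra.
    eapply Rle_trans. apply (E_subadd hE); auto. apply (H_ic hH); auto. lra.
  - apply (E_nonneg hF hH hE). apply (H_im hH); auto. intro v; destruct (indic_01 N v) as [[e _]|[e _]]; rewrite e.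
    rewrite Rmult_1_l; auto. lra. Qed.

Definition good {Omega : Type} (H : (Omega -> R) -> Prop) (E : nat -> (Omega -> R) -> (Omega -> R)) (w0 : Omega)
  (C : R) (Y : nat -> Omega -> R) : Prop :=
  (forall k, H (Y k)) /\ forall k, E 0%nat (fun w => Rabs (Y (S k) w - Y k w)) w0 <= C * (/2)^k.

Definition cvq {Omega : Type} (F : nat -> (Omega -> Prop) -> Prop) (E : nat -> (Omega -> R) -> (Omega -> R)) (w0 : Omega)
  (Y : nat -> Omega -> R) (X : Omega -> R) : Prop :=
  qs F E w0 (fun w => Un_cv (fun k => Y k w) (X w)).

Lemma good_dom {Omega : Type} {F : nat -> (Omega -> Prop) -> Prop} {H : (Omega -> R) -> Prop}
  {E : nat -> (Omega -> R) -> (Omega -> R)}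
  (hH : Hspace F H) (hE : SLexp F H E) w0 C (G D : nat -> Omega -> R) :
  (forall k, H (G k)) -> (forall k, H (D k)) -> (forall k w, Rabs (G (S k) w - G k w) <= D k w) ->
  (forall k, E 0%nat (D k) w0 <= C * (/2)^k) -> good H E w0 C G.
Proof. intros a b c d; split; auto. intro k. eapply Rle_trans; [|apply d].
  apply (E_le hE); auto. apply (H_rabs hH), (H_minus hH); auto. Qed.

Lemma geom_sum C k m : sum_f_R0 (fun j => C * (/2)^(k+j)) m = 2 * C * (/2)^k * (1 - (/2)^(S m)).
Proof. induction m.
  - simpl. rewrite Nat.add_0_r. field.
  - simpl sum_f_R0. rewrite IHm. rewrite pow_add. simpl. field. Qed.

Lemma tri_aux a b : Rabs a <= Rabs (b - a) + Rabs b.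
Proof. replace a with (- (b - a) + b) at 1 by ring. eapply Rle_trans. apply Rabs_triang. rewrite Rabs_Ropp; lra. Qed.

Lemma key {Omega : Type} {F : nat -> (Omega -> Prop) -> Prop} {H : (Omega -> R) -> Prop}
  {E : nat -> (Omega -> R) -> (Omega -> R)}
  (hF : filtration F) (hH : Hspace F H) (hE : SLexp F H E) w0 C W :
  good H E w0 C W -> cvq F E w0 W (fun _ => 0) ->
  forall k, E 0%nat (fun w => Rabs (W k w)) w0 <= 2 * C * (/2)^k.
Proof.
  intros [hW gW] [N [nN hN]] k.
  assert (C0 : 0 <= C).
  { specialize (gW 0%nat). simpl in gW.
    assert (0 <= E 0%nat (fun w => Rabs (W 1%nat w - W 0%nat w)) w0).
    apply (E_nonneg hF hH hE). apply (H_rabs hH), (H_minus hH); auto. intro; apply Rabs_pos. lra. }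
  set (d := fun j w => Rabs (W (S (k+j)) w - W (k+j)%nat w)).
  set (h := fun m w => sum_f_R0 (fun j => d j w) m).
  assert (Hd : forall j, H (d j)). { intro j; apply (H_rabs hH), (H_minus hH); auto. }
  assert (d0 : forall j w, 0 <= d j w). { intros; apply Rabs_pos. }
  assert (Hh : forall m, H (h m)).
  { induction m. exact (Hd 0%nat). apply (H_ext (F:=F) (fun w => h m w + d (S m) w)). apply (H_plus hH); auto.
    intro; reflexivity. }
  assert (h0 : forall m w, 0 <= h m w).
  { induction m; intro w. apply d0. unfold h; simpl. specialize (IHm w). unfold h in IHm. specialize (d0 (S m) w). lra. }
  assert (Eh : forall m, E 0%nat (h m) w0 <= sum_f_R0 (fun j => C * (/2)^(k+j)) m).
  { induction m.
    - simpl. rewrite (E_eq E 0 _ (d 0%nat)) by (intro; reflexivity). apply gW.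
    - simpl sum_f_R0. rewrite (E_eq E 0 _ (fun w => h m w + d (S m) w)) by (intro; reflexivity).
      eapply Rle_trans. apply (E_subadd hE); auto. specialize (gW (k + S m)%nat).
      assert (E 0%nat (d (S m)) w0 <= C * (/2)^(k + S m)); [|lra].
      eapply Rle_trans; [|apply gW]. right. apply E_eq. intro; reflexivity. }
  assert (Eh2 : forall m, E 0%nat (h m) w0 <= 2 * C * (/2)^k).
  { intro m. eapply Rle_trans. apply Eh. rewrite geom_sum.
    assert (0 <= (/2)^(S m)) by (apply pow_le; lra). assert (0 <= (/2)^k) by (apply pow_le; lra).
    assert (0 <= C * (/2)^k) by (apply Rmult_le_pos; lra). nra. }
  assert (tri : forall m w, Rabs (W k w) <= h m w + Rabs (W (k + S m)%nat w)).
  { induction m; intro w.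
    - replace (k + 1)%nat with (S (k + 0)) by lia. unfold h; simpl. unfold d. rewrite Nat.add_0_r. apply tri_aux.
    - specialize (IHm w). replace (k + S (S m))%nat with (S (k + S m)) by lia.
      unfold h; simpl. unfold h in IHm. unfold d at 2.
      pose proof (tri_aux (W (k + S m)%nat w) (W (S (k + S m)) w)). lra. }
  assert (nNc : Finf F (fun v => ~ N v)) by (apply (sa_compl (Finf F) N (Finf_sa F)); apply nN).
  set (f := fun m w => indic (fun v => ~ N v) w * Rmax (Rabs (W k w) - h m w) 0).
  assert (Hf : forall m, H (f m)).
  { intro m; apply (H_im hH); auto. apply (H_pp hH), (H_minus hH); auto. apply (H_rabs hH); auto. }
  assert (cv : Un_cv (fun m => E 0%nat (f m) w0) 0).
  { apply (E_cont hE f); auto.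
    - intros m w. unfold f. destruct (indic_01 (fun v => ~ N v) w) as [[e _]|[e _]]; rewrite e; [|lra].
      apply Rmult_le_compat_l; [lra|]. apply Rle_max_compat_r.
      assert (h m w <= h (S m) w); [|lra]. unfold h; simpl. specialize (d0 (S m) w). lra.
    - intros w e he. destruct (indic_01 (fun v => ~ N v) w) as [[ei hi]|[ei hi]].
      + destruct (hN w hi e he) as [M hM]. exists M; intros m hm. unfold R_dist, f. rewrite ei, Rmult_1_l, Rminus_0_r.
        specialize (hM (k + S m)%nat ltac:(lia)). unfold R_dist in hM. rewrite Rminus_0_r in hM.
        specialize (tri m w). specialize (h0 m w).
        rewrite Rabs_right. unfold Rmax; destruct Rle_dec; lra. apply Rle_ge, Rmax_r.
      + exists O; intros m _. unfold R_dist, f. rewrite ei, Rmult_0_l, Rminus_0_r, Rabs_R0; auto. }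
  assert (E 0%nat (fun w => Rabs (W k w)) w0 <= 0 + 2 * C * (/2)^k); [|lra].
  apply (Rle_cv_lim (Un := fun _ => E 0%nat (fun w => Rabs (W k w)) w0)
                    (Vn := fun m => E 0%nat (f m) w0 + 2 * C * (/2)^k)).
  2: apply cv_const. 2: apply CV_plus; auto; apply cv_const.
  intro m.
  assert (HN : H (fun w => indic N w * Rabs (W k w))) by (apply (H_im hH); [apply nN | apply (H_rabs hH); auto]).
  assert (Hfh : H (fun w => f m w + h m w)) by (apply (H_plus hH); auto).
  eapply Rle_trans. apply (E_le hE) with (Y := fun w => indic N w * Rabs (W k w) + (f m w + h m w)).
  apply (H_rabs hH); auto. apply (H_plus hH); auto.
  { intro w. unfold f. specialize (h0 m w). specialize (tri m w). pose proof (Rabs_pos (W k w)).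
    destruct (indic_01 N w) as [[e1 i1]|[e1 i1]]; destruct (indic_01 (fun v => ~ N v) w) as [[e2 i2]|[e2 i2]];
    rewrite e1, e2; try tauto.
    - lra.
    - unfold Rmax; destruct Rle_dec; lra. }
  eapply Rle_trans. apply (E_subadd hE); auto.
  rewrite (null_int hF hH hE w0 N (fun w => Rabs (W k w)) nN (H_rabs hH _ (hW k)) (fun w => Rabs_pos _)).
  eapply Rle_trans. apply Rplus_le_compat_l. apply (E_subadd hE); auto.
  specialize (Eh2 m). lra.
Qed.

Lemma rmax_lip a b : Rabs (Rmax a 0 - Rmax b 0) <= Rabs (a - b).
Proof. unfold Rmax; repeat destruct Rle_dec; unfold Rabs; repeat destruct Rcase_abs; lra. Qed.

Lemma lip2 a b x x' : x <= x' -> Rabs (Rmax (a - b) 0 - 0) <= Rabs (a - x) + Rabs (b - x').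
Proof. intro h. unfold Rmax; destruct Rle_dec; unfold Rabs; repeat destruct Rcase_abs; lra. Qed.

Lemma cmp {Omega : Type} {F : nat -> (Omega -> Prop) -> Prop} {H : (Omega -> R) -> Prop}
  {E : nat -> (Omega -> R) -> (Omega -> R)}
  (hF : filtration F) (hH : Hspace F H) (hE : SLexp F H E) w0 C C' Y Y' X X' :
  good H E w0 C Y -> good H E w0 C' Y' -> cvq F E w0 Y X -> cvq F E w0 Y' X' ->
  qs F E w0 (fun w => X w <= X' w) ->
  forall k, E 0%nat (Y k) w0 <= E 0%nat (Y' k) w0 + 2 * (C + C') * (/2)^k.
Proof.
  intros gY gY' cY cY' hle k.
  destruct gY as [hY eY], gY' as [hY' eY'].
  set (W := fun k w => Rmax (Y k w - Y' k w) 0).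
  assert (HW : forall k, H (W k)) by (intro; apply (H_pp hH), (H_minus hH); auto).
  assert (gW : good H E w0 (C + C') W).
  { apply (good_dom hH hE w0 (C+C') W (fun k w => Rabs (Y (S k) w - Y k w) + Rabs (Y' (S k) w - Y' k w))); auto.
    - intro j; apply (H_plus hH); apply (H_rabs hH), (H_minus hH); auto.
    - intros j w. unfold W. eapply Rle_trans. apply rmax_lip.
      replace (Y (S j) w - Y' (S j) w - (Y j w - Y' j w)) with ((Y (S j) w - Y j w) + - (Y' (S j) w - Y' j w)) by ring.
      eapply Rle_trans. apply Rabs_triang. rewrite Rabs_Ropp; lra.
    - intro j. eapply Rle_trans. apply (E_subadd hE); apply (H_rabs hH), (H_minus hH); auto.
      specialize (eY j); specialize (eY' j). lra. }
  assert (cW : cvq F E w0 W (fun _ => 0)).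
  { eapply qs_mono. apply (qs_and hF hH hE). apply (qs_and hF hH hE). exact cY. exact cY'. exact hle.
    intros w [[c1 c2] c3]. eapply cv_dom; [|exact c1|exact c2].
    intro j; simpl. unfold W. apply lip2; auto. }
  pose proof (key hF hH hE w0 (C + C') W gW cW k) as hk.
  assert (E 0%nat (Y k) w0 - E 0%nat (Y' k) w0 <= E 0%nat (fun w => Rabs (W k w)) w0); [|lra].
  eapply Rle_trans. apply (E_diffle hH hE); auto. apply (E_le hE). apply (H_minus hH); auto.
  apply (H_rabs hH); auto. intro v. unfold W. unfold Rmax; destruct Rle_dec; unfold Rabs; destruct Rcase_abs; lra.
Qed.

Lemma approx_good {Omega : Type} {F : nat -> (Omega -> Prop) -> Prop} {H : (Omega -> R) -> Prop}
  {E : nat -> (Omega -> R) -> (Omega -> R)} w0 X Y :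
  approx F H E w0 X Y -> good H E w0 1 Y /\ cvq F E w0 Y X.
Proof. intros [a [b c]]. split; [split|]; auto. intro k. rewrite Rmult_1_l. apply b. Qed.

Lemma EL1_get {Omega : Type} {F : nat -> (Omega -> Prop) -> Prop} {H : (Omega -> R) -> Prop}
  {E : nat -> (Omega -> R) -> (Omega -> R)} w0 X r :
  EL1 F H E w0 X r -> exists Y, good H E w0 1 Y /\ cvq F E w0 Y X /\ Un_cv (fun k => E 0%nat (Y k) w0) r.
Proof. intros [Y [a b]]. destruct (approx_good w0 X Y a). exists Y; auto. Qed.

Lemma L1_get {Omega : Type} {F : nat -> (Omega -> Prop) -> Prop} {H : (Omega -> R) -> Prop}
  {E : nat -> (Omega -> R) -> (Omega -> R)} w0 X :
  inL1 F H E w0 X -> exists Y, good H E w0 1 Y /\ cvq F E w0 Y X.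
Proof. intros [Y a]. exists Y; apply (approx_good w0 X Y a). Qed.

Lemma CEL1_get {Omega : Type} {F : nat -> (Omega -> Prop) -> Prop} {H : (Omega -> R) -> Prop}
  {E : nat -> (Omega -> R) -> (Omega -> R)} w0 t X Z :
  CEL1 F H E w0 t X Z -> exists Y, good H E w0 1 Y /\ cvq F E w0 Y X /\ cvq F E w0 (fun k => E t (Y k)) Z.
Proof. intros [Y [a b]]. destruct (approx_good w0 X Y a). exists Y; auto. Qed.

Lemma good_E {Omega : Type} {F : nat -> (Omega -> Prop) -> Prop} {H : (Omega -> R) -> Prop}
  {E : nat -> (Omega -> R) -> (Omega -> R)}
  (hH : Hspace F H) (hE : SLexp F H E) w0 C t Y :
  good H E w0 C Y -> good H E w0 C (fun k => E t (Y k)).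
Proof. intros [hY gY].
  apply (good_dom hH hE w0 C _ (fun k => E t (fun w => Rabs (Y (S k) w - Y k w)))).
  - intro k; apply (E_H hE); auto.
  - intro k; apply (E_H hE). apply (H_rabs hH), (H_minus hH); auto.
  - intros k w. apply (E_absd hH hE); auto.
  - intro k. rewrite (E_tw hE). apply gY. apply (H_rabs hH), (H_minus hH); auto. Qed.

Lemma E_split {Omega : Type} {F : nat -> (Omega -> Prop) -> Prop} {H : (Omega -> R) -> Prop}
  {E : nat -> (Omega -> R) -> (Omega -> R)}
  (hF : filtration F) (hE : SLexp F H E) t S Q w : F t S -> H Q ->
  E t Q w = E t (fun v => indic S v * Q v) w + E t (fun v => indic (fun u => ~ S u) v * Q v) w.
Proof. intros hS hQ. rewrite (E_ind hE t S Q hS hQ), (E_ind hE t (fun u => ~ S u) Q); auto.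
  destruct (indic_01 S w) as [[e i]|[e i]]; destruct (indic_01 (fun u => ~ S u) w) as [[e' i']|[e' i']];
    rewrite e, e'; try tauto; ring.
  apply sa_compl; auto. apply (filt_sigma hF). Qed.

Lemma lim_tail {Omega : Type} {F : nat -> (Omega -> Prop) -> Prop} {H : (Omega -> R) -> Prop}
  {E : nat -> (Omega -> R) -> (Omega -> R)}
  (hF : filtration F) (hH : Hspace F H) (hE : SLexp F H E) w0 C Y r :
  good H E w0 C Y -> Un_cv (fun k => E 0%nat (Y k) w0) r ->
  forall k, E 0%nat (Y k) w0 <= r + 2 * C * (/2)^k.
Proof. intros [hY gY] cv k.
  assert (C0 : 0 <= C).
  { specialize (gY 0%nat). simpl in gY.
    assert (0 <= E 0%nat (fun w => Rabs (Y 1%nat w - Y 0%nat w)) w0).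
    apply (E_nonneg hF hH hE). apply (H_rabs hH), (H_minus hH); auto. intro; apply Rabs_pos. lra. }
  assert (dif : forall j, E 0%nat (Y j) w0 <= E 0%nat (Y (S j)) w0 + C * (/2)^j).
  { intro j. pose proof (gY j) as a1.
    pose proof (E_absd hH hE 0 (Y (S j)) (Y j) w0 (hY _) (hY _)) as a2.
    pose proof (Rle_abs (E 0%nat (Y j) w0 - E 0%nat (Y (S j)) w0)) as a3.
    rewrite Rabs_minus_sym in a3. lra. }
  assert (st : forall m, E 0%nat (Y k) w0 <= E 0%nat (Y (k + S m)%nat) w0 + sum_f_R0 (fun j => C * (/2)^(k+j)) m).
  { induction m.
    - simpl. rewrite Nat.add_0_r. replace (k+1)%nat with (S k) by lia. apply dif.
    - simpl sum_f_R0. pose proof (dif (k + S m)%nat). replace (k + S (S m))%nat with (S (k + S m)) by lia. cbv beta in *. lra. }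
  assert (E 0%nat (Y k) w0 <= r + 2 * C * (/2)^k + 0); [|lra].
  apply (Rle_cv_lim (Un := fun _ => E 0%nat (Y k) w0) (Vn := fun m => E 0%nat (Y (k + S m)%nat) w0 + 2 * C * (/2)^k)).
  - intro m. cbv beta. eapply Rle_trans. apply (st m). rewrite geom_sum.
    assert (0 <= (/2)^(S m)) by (apply pow_le; lra). assert (0 <= (/2)^k) by (apply pow_le; lra).
    assert (0 <= C * (/2)^k * (/2)^(S m)) by (apply Rmult_le_pos; [apply Rmult_le_pos; [lra|apply pow_le; lra]|apply pow_le; lra]). nra.
  - apply cv_const.
  - rewrite Rplus_0_r. apply CV_plus. 2: apply cv_const.
    intros e he. destruct (cv e he) as [N hN]. exists N. intros m hm. apply hN. lia.
Qed.

Definition Bset {Omega : Type} (P : nat -> Omega -> Prop) (m : nat) : Omega -> Prop :=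
  fun w => exists j, (1 <= j <= m)%nat /\ P j w.

Lemma Bset_0 {Omega : Type} (P : nat -> Omega -> Prop) w : ~ Bset P 0 w.
Proof. intros [j [hj _]]; lia. Qed.

Lemma Bset_S {Omega : Type} (P : nat -> Omega -> Prop) m w : Bset P (S m) w <-> Bset P m w \/ P (S m) w.
Proof. split.
  - intros [j [hj pj]]. destruct (Nat.eq_dec j (S m)) as [e|e]. subst; auto. left; exists j; split; auto; lia.
  - intros [[j [hj pj]]|h]. exists j; split; auto; lia. exists (S m); split; auto; lia. Qed.

Lemma Bset_mono {Omega : Type} (P : nat -> Omega -> Prop) m m' w : (m <= m')%nat -> Bset P m w -> Bset P m' w.
Proof. intros h [j [hj pj]]; exists j; split; auto; lia. Qed.

Lemma Bset_meas {Omega : Type} (G : (Omega -> Prop) -> Prop) (P : nat -> Omega -> Prop) m :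
  sigma_algebra G -> (forall j, (1 <= j <= m)%nat -> G (P j)) -> G (Bset P m).
Proof. intro hG. induction m; intro hP.
  - apply (sa_ext _ (fun _ => False)). apply sa_False; auto. intro w; split; [tauto|apply Bset_0].
  - apply (sa_ext _ (fun w => Bset P m w \/ P (S m) w)). apply sa_union; auto.
    apply IHm; intros; apply hP; lia. apply hP; lia. intro w; rewrite Bset_S; tauto. Qed.

Lemma maxX_iff {Omega : Type} (X : nat -> Omega -> R) lam m w :
  maxX X (S m) w >= lam <-> Bset (fun j v => X j v >= lam) (S m) w.
Proof. induction m.
  - simpl. split. intro h. exists 1%nat; split; [lia|]. unfold Rmax in h; destruct Rle_dec; auto.
    intros [j [hj pj]]. replace j with 1%nat in pj by lia. unfold Rmax; destruct Rle_dec; auto.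
  - change (maxX X (S (S m)) w) with (Rmax (maxX X (S m) w) (X (S (S m)) w)).
    rewrite Bset_S, <- IHm. unfold Rmax; destruct Rle_dec; lra. Qed.

Lemma minX_iff {Omega : Type} (X : nat -> Omega -> R) lam m w :
  minX X (S m) w <= - lam <-> Bset (fun j v => X j v <= - lam) (S m) w.
Proof. induction m.
  - simpl. split. intro h. exists 1%nat; split; [lia|]. unfold Rmin in h; destruct Rle_dec; auto.
    intros [j [hj pj]]. replace j with 1%nat in pj by lia. unfold Rmin; destruct Rle_dec; auto.
  - change (minX X (S (S m)) w) with (Rmin (minX X (S m) w) (X (S (S m)) w)).
    rewrite Bset_S, <- IHm. unfold Rmin; destruct Rle_dec; lra. Qed.

Lemma meas_incr {Omega : Type} {F : nat -> (Omega -> Prop) -> Prop} (hF : filtration F) s t X :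
  (s <= t)%nat -> measurable (F s) X -> measurable (F t) X.
Proof. intros h m a. apply (filt_incr hF (s:=s) (t:=t)); auto. Qed.

Lemma Ht_ic {Omega : Type} {F : nat -> (Omega -> Prop) -> Prop} {H : (Omega -> R) -> Prop}
  (hF : filtration F) (hH : Hspace F H) t A c : F t A -> Ht F H t (fun w => c * indic A w).
Proof. intro hA. split. apply (H_ic hH). apply (F_Finf _ t); auto.
  rewrite (fext (fun w => c * indic A w) (fun w => indic A w * (fun _ => c) w)) by (intro; simpl; ring).
  apply meas_indic_mul; auto. apply (filt_sigma hF). apply meas_const, (filt_sigma hF). Qed.

Lemma Ht_im {Omega : Type} {F : nat -> (Omega -> Prop) -> Prop} {H : (Omega -> R) -> Prop}
  (hF : filtration F) (hH : Hspace F H) t A f : F t A -> Ht F H t f -> Ht F H t (fun w => indic A w * f w).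
Proof. intros hA [h m]. split. apply (H_im hH); auto. apply (F_Finf _ t); auto.
  apply meas_indic_mul; auto. apply (filt_sigma hF). Qed.

Lemma part1 {Omega : Type} {F : nat -> (Omega -> Prop) -> Prop} {H : (Omega -> R) -> Prop}
  {E : nat -> (Omega -> R) -> (Omega -> R)}
  (hF : filtration F) (hH : Hspace F H) (hE : SLexp F H E) w0 n (X : nat -> Omega -> R) lam :
  (0 <= lam) ->
  (forall j, (1 <= j <= n)%nat -> measurable (F j) (X j)) ->
  (forall s, (1 <= s <= n)%nat -> exists Z, CEL1 F H E w0 s (X n) Z /\ qs F E w0 (fun w => X s w <= Z w)) ->
  let P := fun j v => X j v >= lam in
  let A := Bset P n in
  let U := fun m w => lam * indic (Bset P m) w + indic (fun v => A v /\ ~ Bset P m v) w * X n w in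
  forall m, (m <= n)%nat ->
  forall C Y X', good H E w0 C Y -> cvq F E w0 Y X' -> qs F E w0 (fun w => U m w <= X' w) ->
  exists D, forall k, E 0%nat (fun w => lam * indic A w) w0 <= E 0%nat (Y k) w0 + D * (/2)^k.
Proof.
  intros hlam hmeas hsub P A U.
  assert (sF : forall t, sigma_algebra (F t)) by (apply (filt_sigma hF)).
  assert (PF : forall m t, (m <= t)%nat -> (t <= n)%nat -> F t (Bset P m)).
  { intros m t h1 h2. apply Bset_meas; auto. intros j hj. unfold P. apply meas_ge; auto.
    apply (meas_incr hF j); [lia|]. apply hmeas; lia. }
  assert (AF : Finf F A) by (apply (F_Finf _ n); apply PF; lia).
  assert (main : forall i, (i <= n)%nat -> forall C Y X', good H E w0 C Y -> cvq F E w0 Y X' ->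
    qs F E w0 (fun w => U (n - i)%nat w <= X' w) ->
    exists D, forall k, E 0%nat (fun w => lam * indic A w) w0 <= E 0%nat (Y k) w0 + D * (/2)^k).
  { induction i; intros hi C Y X' gY cY qY.
    -
      exists (2 * (0 + C)). intro k.
      set (K := fun (k : nat) w => lam * indic A w).
      assert (gK : good H E w0 0 K).
      { apply (good_dom hH hE w0 0 K (fun _ _ => 0)).
        - intro; apply (H_ic hH); auto.
        - intro; apply (H_cst hH).
        - intros; unfold K; rewrite Rminus_diag, Rabs_R0; lra.
        - intro; rewrite (E_cst hF hH hE); lra. }
      apply (cmp hF hH hE w0 0 C K Y (fun w => lam * indic A w) X' gK gY); auto.
      + apply (qs_all hF hH hE); intro w; unfold K; apply cv_const.
      + eapply qs_mono; [exact qY|]. intros w h. rewrite Nat.sub_0_r in h. unfold U in h.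
        destruct (indic_01 (fun v => A v /\ ~ Bset P n v) w) as [[e i]|[e i]]. unfold A in i; tauto.
        rewrite e in h. change (Bset P n) with A in h. lra.
    -
      set (m := (n - S i)%nat). assert (hm : (S m = n - i)%nat) by (unfold m; lia).
      set (t := S m).
      destruct (hsub t ltac:(unfold t; lia)) as [Z [cZ qZ]].
      destruct (CEL1_get w0 t (X n) Z cZ) as [W [gW [cW cEW]]].
      destruct gW as [hW eW].
      set (Bm := Bset P m). set (Bt := Bset P t).
      set (St := fun v => Bt v /\ ~ Bm v). set (Am := fun v => A v /\ ~ Bm v). set (At := fun v => A v /\ ~ Bt v).
      assert (FBm : F t Bm) by (apply PF; unfold t; lia).
      assert (FBt : F t Bt) by (apply PF; unfold t; lia).
      assert (FSt : F t St) by (apply sa_inter; auto; apply sa_compl; auto).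
      assert (FAm : Finf F Am) by (apply sa_inter; [apply Finf_sa|auto|]; apply sa_compl; [apply Finf_sa|]; apply (F_Finf _ t); auto).
      assert (FAt : Finf F At) by (apply sa_inter; [apply Finf_sa|auto|]; apply sa_compl; [apply Finf_sa|]; apply (F_Finf _ t); auto).
      assert (hBtA : forall v, Bt v -> A v) by (intros v hv; apply (Bset_mono P t n); auto; unfold t; lia).
      assert (hBmt : forall v, Bm v -> Bt v) by (intros v hv; apply (Bset_mono P m t); auto; unfold t; lia).
      set (G := fun k w => lam * indic Bm w + indic Am w * W k w).
      assert (HG : forall k, H (G k)) by (intro; apply (H_plus hH); [apply (H_ic hH); apply (F_Finf _ t); auto|apply (H_im hH); auto]).
      assert (gG : good H E w0 1 G).
      { apply (good_dom hH hE w0 1 G (fun k w => Rabs (W (S k) w - W k w))); auto.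
        - intro; apply (H_rabs hH), (H_minus hH); auto.
        - intros k w. unfold G.
          replace (lam * indic Bm w + indic Am w * W (S k) w - (lam * indic Bm w + indic Am w * W k w))
            with (indic Am w * (W (S k) w - W k w)) by ring.
          rewrite Rabs_mult. destruct (indic_01 Am w) as [[e _]|[e _]]; rewrite e, ?Rabs_R1, ?Rabs_R0;
            pose proof (Rabs_pos (W (S k) w - W k w)); lra. }
      assert (cG : cvq F E w0 G (U m)).
      { eapply qs_mono; [exact cW|]. intros w cw. eapply cv_dom; [|exact cw|apply (cv_const 0)].
        intro k. unfold G, U. fold Bm. fold Am.
        replace (lam * indic Bm w + indic Am w * W k w - (lam * indic Bm w + indic Am w * X n w))
            with (indic Am w * (W k w - X n w)) by ring.
        rewrite Rabs_mult, Rminus_diag, Rabs_R0.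
        destruct (indic_01 Am w) as [[e _]|[e _]]; rewrite e, ?Rabs_R1, ?Rabs_R0;
            pose proof (Rabs_pos (W k w - X n w)); lra. }
      assert (c1 : forall k, E 0%nat (G k) w0 <= E 0%nat (Y k) w0 + 2 * (1 + C) * (/2)^k).
      { apply (cmp hF hH hE w0 1 C G Y (U m) X' (conj HG (proj2 gG)) gY cG cY). exact qY. }
      set (V := fun k w => lam * indic Bm w + (indic St w * E t (W k) w + indic At w * W k w)).
      assert (HV : forall k, H (V k)).
      { intro; apply (H_plus hH). apply (H_ic hH); apply (F_Finf _ t); auto.
        apply (H_plus hH); apply (H_im hH); auto. apply (F_Finf _ t); auto. apply (E_H hE); auto. }
      assert (eGV : forall k, E 0%nat (G k) w0 = E 0%nat (V k) w0).
      { intro k. rewrite <- (E_tw hE t (G k)), <- (E_tw hE t (V k)); auto. f_equal. apply fext. intro w.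
        assert (e1 : E t (G k) w = lam * indic Bm w + E t (fun v => indic Am v * W k v) w).
        { apply (E_transl hF hH hE t (fun v => lam * indic Bm v) (fun v => indic Am v * W k v)).
          apply Ht_ic; auto. apply (H_im hH); auto. }
        assert (e2 : E t (fun v => indic Am v * W k v) w = indic St w * E t (W k) w + E t (fun v => indic At v * W k v) w).
        { rewrite (E_split hF hE t Bt (fun v => indic Am v * W k v) w FBt); [|apply (H_im hH); auto].
          rewrite <- (E_ind hE t St (W k) FSt (hW k)). f_equal; apply E_eq; intro v.
          - pose proof (hBtA v); pose proof (hBmt v).
            unfold St, Am. destruct (indic_01 Bt v) as [[e i1]|[e i1]]; destruct (indic_01 Bm v) as [[e' i2]|[e' i2]];
            destruct (indic_01 (fun v => A v /\ ~ Bm v) v) as [[e3 i3]|[e3 i3]];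
            destruct (indic_01 (fun v => Bt v /\ ~ Bm v) v) as [[e4 i4]|[e4 i4]];
            rewrite ?e, ?e3, ?e4; first [tauto | ring].
          - pose proof (hBtA v); pose proof (hBmt v).
            unfold At, Am. destruct (indic_01 (fun u => ~ Bt u) v) as [[e i1]|[e i1]];
            destruct (indic_01 (fun v => A v /\ ~ Bm v) v) as [[e3 i3]|[e3 i3]];
            destruct (indic_01 (fun v => A v /\ ~ Bt v) v) as [[e4 i4]|[e4 i4]];
            rewrite ?e, ?e3, ?e4; first [tauto | ring]. }
        assert (e3 : E t (V k) w = lam * indic Bm w + (indic St w * E t (W k) w + E t (fun v => indic At v * W k v) w)).
        { unfold V. rewrite (E_transl hF hH hE t (fun v => lam * indic Bm v) (fun v => indic St v * E t (W k) v + indic At v * W k v)).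
          f_equal. apply (E_transl hF hH hE t (fun v => indic St v * E t (W k) v) (fun v => indic At v * W k v)).
          apply Ht_im; auto. apply (E_range hE); auto. apply (H_im hH); auto.
          apply Ht_ic; auto. apply (H_plus hH); apply (H_im hH); auto. apply (F_Finf _ t); auto. apply (E_H hE); auto. }
        rewrite e1, e2, e3; ring. }
      assert (gV : good H E w0 2 V).
      { apply (good_dom hH hE w0 2 V (fun k w => E t (fun v => Rabs (W (S k) v - W k v)) w + Rabs (W (S k) w - W k w))); auto.
        - intro; apply (H_plus hH). apply (E_H hE). apply (H_rabs hH), (H_minus hH); auto. apply (H_rabs hH), (H_minus hH); auto.
        - intros k w. unfold V.
          pose proof (E_absd hH hE t (W (S k)) (W k) w (hW _) (hW _)).
          replace (lam * indic Bm w + (indic St w * E t (W (S k)) w + indic At w * W (S k) w) -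
              (lam * indic Bm w + (indic St w * E t (W k) w + indic At w * W k w)))
            with (indic St w * (E t (W (S k)) w - E t (W k) w) + indic At w * (W (S k) w - W k w)) by ring.
          eapply Rle_trans. apply Rabs_triang. rewrite !Rabs_mult.
          destruct (indic_01 St w) as [[e _]|[e _]]; destruct (indic_01 At w) as [[e' _]|[e' _]]; rewrite e, e';
            rewrite ?Rabs_R1, ?Rabs_R0; pose proof (Rabs_pos (W (S k) w - W k w));
            pose proof (Rabs_pos (E t (W (S k)) w - E t (W k) w)); lra.
        - intro k. eapply Rle_trans. apply (E_subadd hE). apply (E_H hE). apply (H_rabs hH), (H_minus hH); auto.
          apply (H_rabs hH), (H_minus hH); auto.
          rewrite (E_tw hE). specialize (eW k). lra. apply (H_rabs hH), (H_minus hH); auto. }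
      set (Vinf := fun w => lam * indic Bm w + (indic St w * Z w + indic At w * X n w)).
      assert (cV : cvq F E w0 V Vinf).
      { eapply qs_mono. apply (qs_and hF hH hE); [exact cEW|exact cW]. intros w [c1' c2'].
        eapply cv_dom; [|exact c1'|exact c2']. intro k. unfold V, Vinf.
        replace (lam * indic Bm w + (indic St w * E t (W k) w + indic At w * W k w) -
          (lam * indic Bm w + (indic St w * Z w + indic At w * X n w)))
          with (indic St w * (E t (W k) w - Z w) + indic At w * (W k w - X n w)) by ring.
        eapply Rle_trans. apply Rabs_triang. rewrite !Rabs_mult.
        destruct (indic_01 St w) as [[e _]|[e _]]; destruct (indic_01 At w) as [[e' _]|[e' _]]; rewrite e, e';
          rewrite ?Rabs_R1, ?Rabs_R0; pose proof (Rabs_pos (W k w - X n w));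
          pose proof (Rabs_pos (E t (W k) w - Z w)); lra. }
      assert (qV : qs F E w0 (fun w => U (n - i)%nat w <= Vinf w)).
      { eapply qs_mono; [exact qZ|]. intros w hz. rewrite <- hm. fold t. unfold U, Vinf. fold Bt. fold At.
        destruct (indic_01 Bm w) as [[e1 i1]|[e1 i1]]; destruct (indic_01 Bt w) as [[e2 i2]|[e2 i2]];
        destruct (indic_01 St w) as [[e3 i3]|[e3 i3]]; rewrite e1, e2, e3; unfold St in i3; try tauto.
        - lra.
        - exfalso; apply i2. unfold Bm, Bt in *. apply (Bset_mono P m t); auto. unfold t; lia.
        - assert (X t w >= lam). { unfold Bt, t in i2. apply Bset_S in i2. destruct i2; [tauto|auto]. } lra.
        - lra. }
      destruct (IHi ltac:(lia) 2 V Vinf gV cV qV) as [D' hD'].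
      exists (D' + 2 * (1 + C)). intro k. specialize (hD' k). specialize (c1 k). rewrite <- eGV in hD'. lra. }
  intros m hm C Y X' gY cY qY.
  apply (main (n - m)%nat ltac:(lia) C Y X' gY cY). replace (n - (n - m))%nat with m by lia. exact qY.
Qed.

Lemma part2 {Omega : Type} {F : nat -> (Omega -> Prop) -> Prop} {H : (Omega -> R) -> Prop}
  {E : nat -> (Omega -> R) -> (Omega -> R)}
  (hF : filtration F) (hH : Hspace F H) (hE : SLexp F H E) w0 n (X : nat -> Omega -> R) lam :
  (forall j, (1 <= j <= n)%nat -> measurable (F j) (X j)) ->
  (forall j, (1 <= j <= n)%nat -> inL1 F H E w0 (X j)) ->
  (forall s, (1 <= s)%nat -> (S s <= n)%nat -> exists Z, CEL1 F H E w0 s (X (S s)) Z /\ qs F E w0 (fun w => X s w <= Z w)) ->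
  let P := fun j v => X j v <= - lam in
  let T := fun i w => - lam * indic (Bset P i) w + indic (fun v => ~ Bset P i v) w * X (S i) w in
  forall b,
  (forall C Y X', good H E w0 C Y -> cvq F E w0 Y X' -> qs F E w0 (fun w => X' w <= T (n - 1)%nat w) ->
     exists D, forall k, E 0%nat (Y k) w0 <= b + D * (/2)^k) ->
  forall C Y X', good H E w0 C Y -> cvq F E w0 Y X' -> qs F E w0 (fun w => X' w <= T 0%nat w) ->
     exists D, forall k, E 0%nat (Y k) w0 <= b + D * (/2)^k.
Proof.
  intros hmeas hL1 hsub P T b top.
  assert (sF : forall t, sigma_algebra (F t)) by (apply (filt_sigma hF)).
  assert (PF : forall m t, (m <= t)%nat -> (t <= n)%nat -> F t (Bset P m)).
  { intros m t h1 h2. apply Bset_meas; auto. intros j hj. unfold P. apply meas_le.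
    apply (meas_incr hF j); [lia|]. apply hmeas; lia. }
  assert (main : forall j, (j <= n - 1)%nat -> forall C Y X', good H E w0 C Y -> cvq F E w0 Y X' ->
    qs F E w0 (fun w => X' w <= T (n - 1 - j)%nat w) ->
    exists D, forall k, E 0%nat (Y k) w0 <= b + D * (/2)^k).
  { induction j; intros hj C Y X' gY cY qY.
    - apply (top C Y X' gY cY). rewrite Nat.sub_0_r in qY; exact qY.
    - set (i := (n - 1 - S j)%nat). assert (hi : (S i = n - 1 - j)%nat) by (unfold i; lia).
      set (s := S i).
      destruct (L1_get w0 (X s) (hL1 s ltac:(unfold s; lia))) as [Yx [gYx cYx]].
      destruct (hsub s ltac:(unfold s; lia) ltac:(unfold s; lia)) as [Z [cZ qZ]].
      destruct (CEL1_get w0 s (X (S s)) Z cZ) as [W [gW [cW cEW]]].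
      destruct gW as [hW eW]. destruct gYx as [hYx eYx].
      set (Bi := Bset P i). set (Bs := Bset P s).
      assert (FBi : F s Bi) by (apply PF; unfold s; lia).
      assert (FBs : F s Bs) by (apply PF; unfold s; lia).
      assert (FBic : F s (fun v => ~ Bi v)) by (apply sa_compl; auto).
      assert (FBsc : F s (fun v => ~ Bs v)) by (apply sa_compl; auto).
      assert (hBis : forall v, Bi v -> Bs v) by (intros v hv; apply (Bset_mono P i s); auto; unfold s; lia).
      set (G := fun k w => - lam * indic Bi w + indic (fun v => ~ Bi v) w * Yx k w).
      assert (HG : forall k, H (G k)).
      { intro; apply (H_plus hH); [apply (H_ic hH); apply (F_Finf _ s); auto|apply (H_im hH); auto; apply (F_Finf _ s); auto]. }
      assert (gG : good H E w0 1 G).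
      { apply (good_dom hH hE w0 1 G (fun k w => Rabs (Yx (S k) w - Yx k w))); auto.
        - intro; apply (H_rabs hH), (H_minus hH); auto.
        - intros k w. unfold G.
          replace (- lam * indic Bi w + indic (fun v => ~ Bi v) w * Yx (S k) w - (- lam * indic Bi w + indic (fun v => ~ Bi v) w * Yx k w))
            with (indic (fun v => ~ Bi v) w * (Yx (S k) w - Yx k w)) by ring.
          rewrite Rabs_mult. destruct (indic_01 (fun v => ~ Bi v) w) as [[e _]|[e _]]; rewrite e, ?Rabs_R1, ?Rabs_R0;
            pose proof (Rabs_pos (Yx (S k) w - Yx k w)); lra. }
      assert (cG : cvq F E w0 G (T i)).
      { eapply qs_mono; [exact cYx|]. intros w cw. eapply cv_dom; [|exact cw|apply (cv_const 0)].
        intro k. unfold G, T. fold Bi. fold s.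
        replace (- lam * indic Bi w + indic (fun v => ~ Bi v) w * Yx k w - (- lam * indic Bi w + indic (fun v => ~ Bi v) w * X s w))
            with (indic (fun v => ~ Bi v) w * (Yx k w - X s w)) by ring.
        rewrite Rabs_mult, Rminus_diag, Rabs_R0.
        destruct (indic_01 (fun v => ~ Bi v) w) as [[e _]|[e _]]; rewrite e, ?Rabs_R1, ?Rabs_R0;
            pose proof (Rabs_pos (Yx k w - X s w)); lra. }
      assert (c1 : forall k, E 0%nat (Y k) w0 <= E 0%nat (G k) w0 + 2 * (C + 1) * (/2)^k).
      { apply (cmp hF hH hE w0 C 1 Y G X' (T i) gY gG cY cG). exact qY. }
      set (V := fun k w => - lam * indic Bs w + indic (fun v => ~ Bs v) w * E s (W k) w).
      set (Vinf := fun w => - lam * indic Bs w + indic (fun v => ~ Bs v) w * Z w).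
      assert (HV : forall k, H (V k)).
      { intro; apply (H_plus hH); [apply (H_ic hH); apply (F_Finf _ s); auto|apply (H_im hH); [apply (F_Finf _ s); auto|apply (E_H hE); auto]]. }
      assert (gV : good H E w0 1 V).
      { apply (good_dom hH hE w0 1 V (fun k w => E s (fun v => Rabs (W (S k) v - W k v)) w)); auto.
        - intro; apply (E_H hE), (H_rabs hH), (H_minus hH); auto.
        - intros k w. unfold V.
          pose proof (E_absd hH hE s (W (S k)) (W k) w (hW _) (hW _)).
          replace (- lam * indic Bs w + indic (fun v => ~ Bs v) w * E s (W (S k)) w - (- lam * indic Bs w + indic (fun v => ~ Bs v) w * E s (W k) w))
            with (indic (fun v => ~ Bs v) w * (E s (W (S k)) w - E s (W k) w)) by ring.
          rewrite Rabs_mult. destruct (indic_01 (fun v => ~ Bs v) w) as [[e _]|[e _]]; rewrite e, ?Rabs_R1, ?Rabs_R0;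
            pose proof (Rabs_pos (E s (W (S k)) w - E s (W k) w)); lra.
        - intro k. rewrite (E_tw hE). apply eW. apply (H_rabs hH), (H_minus hH); auto. }
      assert (cV : cvq F E w0 V Vinf).
      { eapply qs_mono; [exact cEW|]. intros w cw. eapply cv_dom; [|exact cw|apply (cv_const 0)].
        intro k. unfold V, Vinf.
        replace (- lam * indic Bs w + indic (fun v => ~ Bs v) w * E s (W k) w - (- lam * indic Bs w + indic (fun v => ~ Bs v) w * Z w))
            with (indic (fun v => ~ Bs v) w * (E s (W k) w - Z w)) by ring.
        rewrite Rabs_mult, Rminus_diag, Rabs_R0.
        destruct (indic_01 (fun v => ~ Bs v) w) as [[e _]|[e _]]; rewrite e, ?Rabs_R1, ?Rabs_R0;
            pose proof (Rabs_pos (E s (W k) w - Z w)); lra. }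
      assert (qV : qs F E w0 (fun w => T i w <= Vinf w)).
      { eapply qs_mono; [exact qZ|]. intros w hz. unfold T, Vinf. fold Bi. fold s. pose proof (hBis w).
        destruct (indic_01 Bi w) as [[e1 i1]|[e1 i1]]; destruct (indic_01 Bs w) as [[e2 i2]|[e2 i2]];
        destruct (indic_01 (fun v => ~ Bi v) w) as [[e3 i3]|[e3 i3]]; destruct (indic_01 (fun v => ~ Bs v) w) as [[e4 i4]|[e4 i4]];
        rewrite e1, e2, e3, e4; try tauto.
        - lra.
        - assert (X s w <= - lam). { unfold Bs, s in i2. apply Bset_S in i2. destruct i2; [tauto|auto]. } lra.
        - lra. }
      assert (c2 : forall k, E 0%nat (G k) w0 <= E 0%nat (V k) w0 + 2 * (1 + 1) * (/2)^k).
      { apply (cmp hF hH hE w0 1 1 G V (T i) Vinf gG gV cG cV qV). }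
      set (V' := fun k w => - lam * indic Bs w + indic (fun v => ~ Bs v) w * W k w).
      assert (HV' : forall k, H (V' k)).
      { intro; apply (H_plus hH); [apply (H_ic hH); apply (F_Finf _ s); auto|apply (H_im hH); [apply (F_Finf _ s); auto|auto]]. }
      assert (eVV : forall k, E 0%nat (V k) w0 = E 0%nat (V' k) w0).
      { intro k. rewrite <- (E_tw hE s (V' k)); auto. f_equal. apply fext. intro w.
        unfold V'. rewrite (E_transl hF hH hE s (fun v => - lam * indic Bs v) (fun v => indic (fun v => ~ Bs v) v * W k v)).
        rewrite (E_ind hE s (fun v => ~ Bs v) (W k) FBsc (hW k)). reflexivity.
        apply Ht_ic; auto. apply (H_im hH); auto. apply (F_Finf _ s); auto. }
      assert (gV' : good H E w0 1 V').
      { apply (good_dom hH hE w0 1 V' (fun k w => Rabs (W (S k) w - W k w))); auto.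
        - intro; apply (H_rabs hH), (H_minus hH); auto.
        - intros k w. unfold V'.
          replace (- lam * indic Bs w + indic (fun v => ~ Bs v) w * W (S k) w - (- lam * indic Bs w + indic (fun v => ~ Bs v) w * W k w))
            with (indic (fun v => ~ Bs v) w * (W (S k) w - W k w)) by ring.
          rewrite Rabs_mult. destruct (indic_01 (fun v => ~ Bs v) w) as [[e _]|[e _]]; rewrite e, ?Rabs_R1, ?Rabs_R0;
            pose proof (Rabs_pos (W (S k) w - W k w)); lra. }
      assert (cV' : cvq F E w0 V' (T s)).
      { eapply qs_mono; [exact cW|]. intros w cw. eapply cv_dom; [|exact cw|apply (cv_const 0)].
        intro k. unfold V', T. fold Bs.
        replace (- lam * indic Bs w + indic (fun v => ~ Bs v) w * W k w - (- lam * indic Bs w + indic (fun v => ~ Bs v) w * X (S s) w))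
            with (indic (fun v => ~ Bs v) w * (W k w - X (S s) w)) by ring.
        rewrite Rabs_mult, Rminus_diag, Rabs_R0.
        destruct (indic_01 (fun v => ~ Bs v) w) as [[e _]|[e _]]; rewrite e, ?Rabs_R1, ?Rabs_R0;
            pose proof (Rabs_pos (W k w - X (S s) w)); lra. }
      destruct (IHj ltac:(lia) 1 V' (T s) gV' cV') as [D' hD'].
      { unfold s; rewrite hi. apply (qs_all hF hH hE); intro; lra. }
      exists (D' + 2 * (1 + 1) + 2 * (C + 1)). intro k. specialize (hD' k). specialize (c1 k). specialize (c2 k).
      rewrite eVV in c2. lra. }
  intros C Y X' gY cY qY.
  apply (main (n - 1)%nat ltac:(lia) C Y X' gY cY). replace (n - 1 - (n - 1))%nat with 0%nat by lia. exact qY.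
Qed.

Lemma EL1_mono {Omega : Type} {F : nat -> (Omega -> Prop) -> Prop} {H : (Omega -> R) -> Prop}
  {E : nat -> (Omega -> R) -> (Omega -> R)}
  (hF : filtration F) (hH : Hspace F H) (hE : SLexp F H E) w0 X X' r r' :
  EL1 F H E w0 X r -> EL1 F H E w0 X' r' -> (forall w, X w <= X' w) -> r <= r'.
Proof. intros h h' le.
  destruct (EL1_get w0 X r h) as [Y [gY [cY lY]]]. destruct (EL1_get w0 X' r' h') as [Y' [gY' [cY' lY']]].
  apply (lim_le_err2 _ _ r r' (2 * (1 + 1)) (cmp hF hH hE w0 1 1 Y Y' X X' gY gY' cY cY' (qs_all hF hH hE w0 _ le))); auto. Qed.

Theorem theorem3p1 (Omega : Type) (F : nat -> (Omega -> Prop) -> Prop)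
  (H : (Omega -> R) -> Prop) (E : nat -> (Omega -> R) -> (Omega -> R)) (w0 : Omega)
  (hF : filtration F) (hH : Hspace F H) (hE : SLexp F H E)
  (n : nat) (X : nat -> (Omega -> R))
  (hn : (1 <= n)%nat) (hX : SLsubmart F H E w0 n X)
  (lam : R) (hlam : 0 < lam) :
  (forall r1 r2 r3 : R,
     EL1 F H E w0 (fun w => indic (fun v => maxX X n v >= lam) w * X n w) r1 ->
     EL1 F H E w0 (fun w => ppart (X n w)) r2 ->
     EL1 F H E w0 (fun w => Rabs (X n w)) r3 ->
     lam * capV E w0 (fun v => maxX X n v >= lam) <= r1 /\ r1 <= r2 /\ r2 <= r3)
  /\
  (forall (rn r1 s1 s2 : R),
     EL1 F H E w0 (X n) rn ->
     EL1 F H E w0 (X 1%nat) r1 ->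
     EL1 F H E w0 (fun w => - (indic (fun v => minX X n v <= - lam) w * X n w)) s1 ->
     EL1 F H E w0 (fun w => npart (X n w)) s2 ->
     lam * capv E w0 (fun v => minX X n v <= - lam) <= rn - r1 + s1 /\
     rn - r1 + s1 <= rn - r1 + s2).
Proof.
  destruct hX as [hX1 hX2].
  assert (hmeas : forall j, (1 <= j <= n)%nat -> measurable (F j) (X j)) by (intros j hj; apply (hX1 j hj)).
  assert (hL1 : forall j, (1 <= j <= n)%nat -> inL1 F H E w0 (X j)) by (intros j hj; apply (hX1 j hj)).
  destruct n as [|n']; [lia|].
  split.
  - intros r1 r2 r3 h1 h2 h3.
    set (P := fun j v => X j v >= lam).
    assert (eA : (fun v => maxX X (S n') v >= lam) = Bset P (S n')).
    { apply sext; intro w; apply maxX_iff. }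
    rewrite eA in *. set (A := Bset P (S n')) in *.
    split; [|split].
    + destruct (EL1_get w0 _ r1 h1) as [R [gR [cR lR]]].
      assert (hsub : forall s, (1 <= s <= S n')%nat -> exists Z, CEL1 F H E w0 s (X (S n')) Z /\ qs F E w0 (fun w => X s w <= Z w)).
      { intros s hs. apply hX2; lia. }
      destruct (part1 hF hH hE w0 (S n') X lam ltac:(lra) hmeas hsub 0%nat ltac:(lia) 1 R _ gR cR) as [D hD].
      { apply (qs_all hF hH hE); intro w. fold P. fold A.
        destruct (indic_01 (Bset P 0) w) as [[e i]|[e i]]. exfalso; apply (Bset_0 P w); auto.
        rewrite e. destruct (indic_01 (fun v => A v /\ ~ Bset P 0 v) w) as [[e1 i1]|[e1 i1]];
        destruct (indic_01 A w) as [[e2 i2]|[e2 i2]]; rewrite e1, e2; try tauto; lra. }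
      unfold capV, Ereal. rewrite <- (E_posc hF hH hE 0 lam (indic A) w0); [|lra|apply (H_indic hH); apply (F_Finf _ (S n')); apply Bset_meas; [apply (filt_sigma hF)|]; intros j hj; unfold P; apply meas_ge; [apply (filt_sigma hF)|]; apply (meas_incr hF j); [lia|apply hmeas; lia]].
      apply (lim_le_err _ _ r1 D hD lR).
    + apply (EL1_mono hF hH hE w0 _ _ r1 r2 h1 h2). intro w. unfold ppart.
      destruct (indic_01 A w) as [[e _]|[e _]]; rewrite e; unfold Rmax; destruct Rle_dec; lra.
    + apply (EL1_mono hF hH hE w0 _ _ r2 r3 h2 h3). intro w. unfold ppart.
      unfold Rmax, Rabs; destruct Rle_dec; destruct Rcase_abs; lra.
  - intros rn r1 s1 s2 hrn hr1 hs1 hs2.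
    set (P := fun j v => X j v <= - lam).
    assert (eB : (fun v => minX X (S n') v <= - lam) = Bset P (S n')).
    { apply sext; intro w; apply minX_iff. }
    rewrite eB in *. set (B := Bset P (S n')) in *.
    assert (FB : Finf F B).
    { apply (F_Finf _ (S n')); apply Bset_meas; [apply (filt_sigma hF)|]; intros j hj; unfold P; apply meas_le.
      apply (meas_incr hF j); [lia|apply hmeas; lia]. }
    split.
    + set (b := E 0%nat (fun w => - lam * indic B w) w0 + rn + s1).
      assert (hsub2 : forall s, (1 <= s)%nat -> (S s <= S n')%nat -> exists Z, CEL1 F H E w0 s (X (S s)) Z /\ qs F E w0 (fun w => X s w <= Z w)).
      { intros s h1 h2. apply hX2; lia. }
      assert (top : forall C Y X', good H E w0 C Y -> cvq F E w0 Y X' ->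
        qs F E w0 (fun w => X' w <= (fun i w => - lam * indic (Bset P i) w + indic (fun v => ~ Bset P i v) w * X (S i) w) (S n' - 1)%nat w) ->
        exists D, forall k, E 0%nat (Y k) w0 <= b + D * (/2)^k).
      { intros C Y X' gY cY qY.
        destruct (EL1_get w0 _ rn hrn) as [Yn [gYn [cYn lYn]]].
        destruct (EL1_get w0 _ s1 hs1) as [S1 [gS1 [cS1 lS1]]].
        pose proof (lim_tail hF hH hE w0 1 Yn rn gYn lYn) as tn.
        pose proof (lim_tail hF hH hE w0 1 S1 s1 gS1 lS1) as ts.
        destruct gYn as [hYn eYn], gS1 as [hS1 eS1].
        set (K := fun k w => - lam * indic B w + (Yn k w + S1 k w)).
        assert (HK : forall k, H (K k)) by (intro; apply (H_plus hH); [apply (H_ic hH); auto|apply (H_plus hH); auto]).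
        assert (gK : good H E w0 2 K).
        { apply (good_dom hH hE w0 2 K (fun k w => Rabs (Yn (S k) w - Yn k w) + Rabs (S1 (S k) w - S1 k w))); auto.
          - intro; apply (H_plus hH); apply (H_rabs hH), (H_minus hH); auto.
          - intros k w. unfold K.
            replace (- lam * indic B w + (Yn (S k) w + S1 (S k) w) - (- lam * indic B w + (Yn k w + S1 k w)))
              with ((Yn (S k) w - Yn k w) + (S1 (S k) w - S1 k w)) by ring. apply Rabs_triang.
          - intro k. eapply Rle_trans. apply (E_subadd hE); apply (H_rabs hH), (H_minus hH); auto.
            specialize (eYn k); specialize (eS1 k). lra. }
        set (Kinf := fun w => - lam * indic B w + (X (S n') w + - (indic B w * X (S n') w))).
        assert (cK : cvq F E w0 K Kinf).
        { eapply qs_mono. apply (qs_and hF hH hE); [exact cYn|exact cS1]. intros w [c1 c2].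
          eapply cv_dom; [|exact c1|exact c2]. intro k. unfold K, Kinf.
          replace (- lam * indic B w + (Yn k w + S1 k w) - (- lam * indic B w + (X (S n') w + - (indic B w * X (S n') w))))
            with ((Yn k w - X (S n') w) + (S1 k w - - (indic B w * X (S n') w))) by ring. apply Rabs_triang. }
        assert (qK : qs F E w0 (fun w => X' w <= Kinf w)).
        { eapply qs_mono; [exact qY|]. intros w hw. cbv beta in hw. replace (S n' - 1)%nat with n' in hw by lia.
          unfold Kinf. unfold B.
          assert (hm : Bset P n' w -> Bset P (S n') w) by (apply Bset_mono; lia).
          destruct (indic_01 (Bset P n') w) as [[e1 i1]|[e1 i1]]; destruct (indic_01 (Bset P (S n')) w) as [[e2 i2]|[e2 i2]];
          destruct (indic_01 (fun v => ~ Bset P n' v) w) as [[e3 i3]|[e3 i3]]; rewrite e1, e3 in hw; rewrite e2; try tauto.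
          - lra.
          - assert (X (S n') w <= - lam). { apply Bset_S in i2. destruct i2; [tauto|auto]. } lra.
          - lra. }
        pose proof (cmp hF hH hE w0 C 2 Y K X' Kinf gY gK cY cK qK) as c1.
        exists (2 * (C + 2) + 2 * 1 + 2 * 1). intro k. specialize (c1 k). specialize (tn k). specialize (ts k).
        assert (E 0%nat (K k) w0 <= E 0%nat (fun w => - lam * indic B w) w0 + E 0%nat (Yn k) w0 + E 0%nat (S1 k) w0).
        { unfold K. eapply Rle_trans. apply (E_subadd hE). apply (H_ic hH); auto. apply (H_plus hH); auto.
          pose proof (E_subadd hE 0 (Yn k) (S1 k) (hYn k) (hS1 k) w0). lra. }
        unfold b. lra. }
      destruct (EL1_get w0 _ r1 hr1) as [R1 [gR1 [cR1 lR1]]].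
      destruct (part2 hF hH hE w0 (S n') X lam hmeas hL1 hsub2 b top 1 R1 (X 1%nat) gR1 cR1) as [D hD].
      { apply (qs_all hF hH hE); intro w. cbv beta. fold P.
        destruct (indic_01 (Bset P 0) w) as [[e i]|[e i]]. exfalso; apply (Bset_0 P w); auto.
        destruct (indic_01 (fun v => ~ Bset P 0 v) w) as [[e1 i1]|[e1 i1]]; rewrite e, e1; try tauto; lra. }
      assert (r1 <= b) by (apply (lim_le_err2 _ (fun _ => b) r1 b D hD lR1 (cv_const b))).
      unfold capv, Ereal.
      assert (E 0%nat (fun w => - lam * indic B w) w0 = lam * E 0%nat (fun w => - indic B w) w0).
      { rewrite <- (E_posc hF hH hE 0 lam (fun w => - indic B w) w0); [|lra|apply (H_opp hH), (H_indic hH); auto].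
        apply E_eq; intro; ring. }
      unfold b in H0. lra.
    + assert (s1 <= s2); [|lra].
      apply (EL1_mono hF hH hE w0 _ _ s1 s2 hs1 hs2). intro w. unfold npart.
      destruct (indic_01 B w) as [[e _]|[e _]]; rewrite e; unfold Rmax; destruct Rle_dec; lra.
Qed.
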